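(* Let $\bar{\Phi}$, $\bar{\mu}$, $\lambda$ and $R_n$ be as in the context, and let $\delta_0$ be the Dirac mass at the origin of $\bar{\mathbb{K}}$. Then for every $n\in\mathbb{N}$, \[|\bar{\Phi}^n(\delta_0)|\le\frac{\lambda^n}{\bar{\mu}(\{0\})}\,\bar{\mu}(R_n),\] where $|\cdot|$ denotes total mass.
   Context: Let $\beta\in(1,2)$ be an algebraic integer none of whose Galois conjugates has modulus $1$. List all its Galois conjugates (both members of each complex-conjugate pair) as $\beta=\beta_1,\dots,\beta_d,\beta_{d+1},\dots,\beta_{d+s},\beta_{d+s+1}$, where $|\beta_1|,\dots,|\beta_d|>1$, $|\beta_{d+1}|,\dots,|\beta_{d+s}|<1$, and $\beta_{d+s+1}$ is real with $|\beta_{d+s+1}|>1$. For $z\in\mathbb{C}$ let $\mathbb{F}_z=\mathbb{R}$ if $z\in\mathbb{R}$ and $\mathbb{C}$ otherwise; let $\bar{\mathbb{K}}=\prod_{j=1}^{d+s+1}\mathbb{F}_{\beta_j}$, $\bar{\beta}^n=(\beta_1^n,\dots,\beta_{d+s+1}^n)$, and for $i\in\mathbb{Z}$ let $\bar{T}_i(x_1,\dots,x_{d+s+1})=(\beta_1x_1+i,\dots,\beta_{d+s+1}x_{d+s+1}+i)$. Let $\pi_e(x)=(x_1,\dots,x_d)$, $\pi_c(x)=(x_{d+1},\dots,x_{d+s})$, $\pi_{free}(x)=x_{d+s+1}$. For $j\le d$ let $I_{\beta_j}=[-\frac{1}{\beta_j-1},\frac{1}{\beta_j-1}]$ if $\beta_j>1$,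 $I_{\beta_j}=\{x\in\mathbb{R}:|x|\le\frac{2}{|\beta_j|-1}\}$ if $\beta_j<-1$, $I_{\beta_j}=\{z\in\mathbb{C}:|z|\le\frac{2}{|\beta_j|-1}\}$ if $\beta_j\notin\mathbb{R}$; $I=\prod_{j\le d}I_{\beta_j}$ and $S=\{x\in\bar{\mathbb{K}}:\pi_e(x)\in I\}$. Let $\bar{X}=\{\sum_{i=1}^n a_i\bar{\beta}^{n-i}:n\in\mathbb{N},a_i\in\{-1,0,1\}\}\cap S$. For $n\ge1$ and $x\in S$ let $\bar{\mu}_n(\{x\})=\#\{(a,b)\in\{0,1\}^n\times\{0,1\}^n:\sum_{i=1}^n(a_i-b_i)\bar{\beta}^{n-i}=x\}$, with $\bar{\mu}_n$ giving no mass outside $S$. It is known (from earlier work of the authors) that there exist $\lambda>1$ and $f:\bar{X}\to(0,\infty)$ with $\lambda^{-n}\bar{\mu}_n(\{x\})\to f(x)$ for every $x\in\bar{X}$, and that $0<f(x)\le f(0)$; let $\bar{\mu}=\sum_{x\in\bar{X}}f(x)\delta_x$. The operator $\bar{\Phi}$ on measures on $\bar{X}$ is $\bar{\Phi}(\mu)(A)=\mu(\bar{T}_{-1}^{-1}(A))+2\mu(\bar{T}_0^{-1}(A))+\mu(\bar{T}_1^{-1}(A))$ for $A\subset S$, and $\bar{\Phi}(\mu)(A)=\bar{\Phi}(\mu)(A\cap S)$ in general (no mass outside $S$). For $n\ge0$ let $R_n=\{x\in\bar{X}:|\pi_{free}(x)|\le\sum_{i=0}^{n-1}|\beta_{d+s+1}|^i\}$.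 *)

(* Defs.v *)
From HB Require Import structures.
From mathcomp Require Import all_boot all_order all_algebra all_field.
From mathcomp Require Import all_classical all_reals all_analysis.
Set Implicit Arguments. Unset Strict Implicit. Unset Printing Implicit Defensive.
Import Order.TTheory GRing.Theory Num.Theory.
Local Open Scope ring_scope.
Local Open Scope classical_set_scope.

(* Points of K-bar: (d+s+1)-tuples of algebraic complex numbers;
   coordinate j is the beta_j-coordinate. *)
Definition pt (N : nat) := {ffun 'I_N -> algC}.

Definition betabar N (c : 'I_N -> algC) (k : nat) : pt N := [ffun j => c j ^+ k].

(* sum_{i=1}^n a_i bar-beta^{n-i}  (0-indexed: a i has exponent n-1-i) *)
Definition digsum N (c : 'I_N -> algC) (n : nat) (a : 'I_n -> int) : pt N :=
  \sum_(i < n) betabar c (n - i.+1) *~ a i.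

Definition Tmap N (c : 'I_N -> algC) (i : int) (x : pt N) : pt N :=
  [ffun j => c j * x j + i%:~R].

Definition inIb (b z : algC) : Prop :=
  if b \is Num.real then
    (if 1 < b then z \is Num.real /\ `|z| <= (b - 1)^-1
     else z \is Num.real /\ `|z| <= 2 / (`|b| - 1))
  else `|z| <= 2 / (`|b| - 1).

(* S = { x : pi_e(x) in I }, pi_e = first d coordinates *)
Definition Sset N (c : 'I_N -> algC) (d : nat) : set (pt N) :=
  [set x | forall j : 'I_N, (j < d)%N -> inIb (c j) (x j)].

Definition Xbar N (c : 'I_N -> algC) (d : nat) : set (pt N) :=
  [set x | (exists (n : nat) (a : 'I_n -> int),
              (forall i, a i \in [:: -1; 0; 1]) /\ x = digsum c a)
           /\ Sset c d x].

Definition mun N (c : 'I_N -> algC) (d n : nat) (x : pt N) : nat :=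
  if `[< Sset c d x >] then
    #|[set ab : {ffun 'I_n -> bool} * {ffun 'I_n -> bool} |
        digsum c (fun i => ((ab.1 i : nat)%:Z - (ab.2 i : nat)%:Z)) == x]|
  else 0%N.

Definition Phi (R : realType) N (c : 'I_N -> algC) (d : nat)
    (mu : set (pt N) -> \bar R) (A : set (pt N)) : \bar R :=
  let B := A `&` Sset c d in
  (mu (Tmap c (-1) @^-1` B) + 2%:E * mu (Tmap c 0 @^-1` B)
   + mu (Tmap c 1 @^-1` B))%E.

Definition deltaO (R : realType) N (A : set (pt N)) : \bar R :=
  (if `[< A 0 >] then 1 else 0)%:E.

Definition mubar (R : realType) N (c : 'I_N -> algC) (d : nat) (f : pt N -> R)
    (A : set (pt N)) : \bar R :=
  (\esum_(x in Xbar c d `&` A) (f x)%:E)%E.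

(* R_n, with free coordinate index = last index d+s *)
Definition Rn (d s : nat) (c : 'I_(d + s).+1 -> algC) (n : nat)
    : set (pt (d + s).+1) :=
  [set x | Xbar c d x /\
     `|x ord_max| <= \sum_(i < n) `|c ord_max| ^+ i].

Definition mass (R : realType) N (mu : set (pt N) -> \bar R) : \bar R := mu setT.

(* Main.v *)
Set Warnings "-all".
Require Import Defs.
From HB Require Import structures.
From mathcomp Require Import all_boot all_order all_algebra all_field.
From mathcomp Require Import all_classical all_reals all_analysis.
From mathcomp Require Import zify ring lra.
Import Order.TTheory GRing.Theory Num.Theory numFieldNormedType.Exports.
Local Open Scope ring_scope.
Local Open Scope classical_set_scope.

Definition pairs N := ({ffun 'I_N -> bool} * {ffun 'I_N -> bool})%type.

Definition ds {K : nat} (c : 'I_K -> algC) {N : nat} (ab : pairs N) : pt K :=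
  digsum c (fun i => ((ab.1 i : nat)%:Z - (ab.2 i : nat)%:Z)).

Lemma digsumE {K : nat} (c : 'I_K -> algC) n (a : 'I_n -> int) j :
  digsum c a j = \sum_(i < n) c j ^+ (n - i.+1) *~ a i.
Proof.
rewrite /digsum sum_ffunE; apply: eq_bigr => i _.
by rewrite ffunMzE /betabar ffunE.
Qed.

Definition catf {T : Type} {m k : nat} (f : {ffun 'I_m -> T}) (g : {ffun 'I_k -> T})
  : {ffun 'I_(m + k) -> T} :=
  [ffun i : 'I_(m + k) => match fintype.split i with inl j => f j | inr j => g j end].

Lemma catf_l {T : Type} {m k : nat} (f : {ffun 'I_m -> T}) (g : {ffun 'I_k -> T}) j :
  catf f g (lshift k j) = f j.
Proof.
rewrite ffunE.
by have -> : fintype.split (lshift k j) = inl j by exact: (unsplitK (inl j : 'I_m + 'I_k)).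
Qed.

Lemma catf_r {T : Type} {m k : nat} (f : {ffun 'I_m -> T}) (g : {ffun 'I_k -> T}) j :
  catf f g (rshift m j) = g j.
Proof.
rewrite ffunE.
by have -> : fintype.split (rshift m j) = inr j by exact: (unsplitK (inr j : 'I_m + 'I_k)).
Qed.

Lemma catf_inj {T : Type} {m k : nat} (f f' : {ffun 'I_m -> T}) (g g' : {ffun 'I_k -> T}) :
  catf f g = catf f' g' -> f = f' /\ g = g'.
Proof.
move=> e; split; apply/ffunP => j.
  by rewrite -(catf_l f g) -(catf_l f' g') e.
by rewrite -(catf_r f g) -(catf_r f' g') e.
Qed.

Definition catp {m k : nat} (p : pairs m) (q : pairs k) : pairs (m + k) :=
  (catf p.1 q.1, catf p.2 q.2).

Lemma catp_inj m k : injective (fun x : pairs m * pairs k => catp x.1 x.2).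
Proof.
move=> [[a b] [a' b']] [[e f] [e' f']] /= [] /catf_inj [-> ->] /catf_inj [-> ->].
by [].
Qed.

Lemma ds_cat K (c : 'I_K -> algC) m k (p : pairs m) (q : pairs k) j :
  ds c (catp p q) j = c j ^+ k * ds c p j + ds c q j.
Proof.
rewrite /ds !digsumE big_split_ord /=; congr (_ + _).
  rewrite mulr_sumr; apply: eq_bigr => i _.
  rewrite !catf_l mulrzAr -exprD; congr (_ ^+ _ *~ _).
  have := ltn_ord i; rewrite /=; lia.
apply: eq_bigr => i _; rewrite !catf_r; congr (_ ^+ _ *~ _).
rewrite /=; lia.
Qed.

Lemma card_inj (X Y : finType) (h : X -> Y) (P : X -> Prop) (Q : Y -> Prop) :
  injective h -> (forall x, P x -> Q (h x)) ->
  (#|[set x | P x]| <= #|[set y | Q y]|)%N.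
Proof.
move=> hi hPQ; rewrite -(card_imset _ hi); apply: subset_leq_card.
apply/fintype.subsetP => y /imsetP [x]; rewrite /in_mem /= /in_set => /asboolP Px ->.
by apply/asboolP; exact: hPQ.
Qed.

Lemma card_sum (X : finType) (P : X -> Prop) :
  #|[set x | P x]| = (\sum_x (`[< P x >] : nat))%N.
Proof.
rewrite -sum1_card big_mkcond /=; apply: eq_bigr => x _.
by rewrite /in_mem /= /in_set; case: `[< P x >].
Qed.

Definition cntP {K : nat} (c : 'I_K -> algC) (N : nat) (P : pt K -> Prop) : nat :=
  #|[set ab : pairs N | P (ds c ab)]|.

Lemma ds_one K (c : 'I_K -> algC) n (p : pairs n) (u v : bool) :
  ds c (catp p (([ffun=> u], [ffun=> v]) : pairs 1)) =
  Tmap c ((u : nat)%:Z - (v : nat)%:Z) (ds c p).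
Proof.
apply/ffunP => j; rewrite ds_cat expr1 /ds !digsumE big_ord1 /Tmap !ffunE /= subnn expr0 digsumE.
by [].
Qed.

Lemma cnt_step K (c : 'I_K -> algC) n (Q : pt K -> Prop) :
  (cntP c n (fun x => Q (Tmap c (-1) x)) + 2 * cntP c n (fun x => Q (Tmap c 0 x))
   + cntP c n (fun x => Q (Tmap c 1 x)) <= cntP c n.+1 Q)%N.
Proof.
rewrite -[n.+1]addn1.
set h := fun x : pairs n * (bool * bool) => catp x.1 (([ffun=> x.2.1], [ffun=> x.2.2]) : pairs 1).
have hi : injective h.
  move=> [p [u v]] [p' [u' v']]; rewrite /h /= => e.
  move: (@catp_inj n 1 (p, ([ffun=> u],[ffun=> v])) (p', ([ffun=> u'],[ffun=> v'])) e).
  case=> -> e1 e2.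
  move: (congr1 (fun f : {ffun 'I_1 -> bool} => f ord0) e1).
  move: (congr1 (fun f : {ffun 'I_1 -> bool} => f ord0) e2).
  by rewrite /= !ffunE => -> ->.
apply: leq_trans (@card_inj _ _ h (fun x => Q (ds c (h x))) (fun y => Q (ds c y)) hi _); last by [].
rewrite /cntP !card_sum.
have -> : (\sum_x `[< Q (ds c (h x)) >] = \sum_p \sum_u \sum_v `[< Q (ds c (h (p,(u,v)))) >])%N.
  rewrite (eq_bigr (fun p => \sum_(uv : bool * bool) `[< Q (ds c (h (p, uv))) >])%N); last first.
    by move=> p _; rewrite pair_bigA; apply: eq_bigr => -[].
  by rewrite pair_bigA; apply: eq_bigr => -[].
rewrite big_distrr /= -!big_split /=; apply: leq_sum => p _.
rewrite !big_bool /h !ds_one /=.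
rewrite subrr; have -> : (- 1%Z) = (-1 : int) by []. 
set a := `[< Q (Tmap c (-1) _) >]. set b := `[< Q (Tmap c 0 _) >]. set e := `[< Q (Tmap c 1 _) >].
by case: a; case: b; case: e.
Qed.

Lemma cntP_mono K (c : 'I_K -> algC) n (P Q : pt K -> Prop) :
  (forall x, P x -> Q x) -> (cntP c n P <= cntP c n Q)%N.
Proof. by move=> PQ; apply: (@card_inj _ _ id) => // x; exact: PQ. Qed.

Lemma iter_le (R : realType) K (c : 'I_K -> algC) d (S0 : Sset c d 0) n :
  forall A, (iter n (Phi c d) (@deltaO R K) A <=
             ((cntP c n (fun x => A x /\ Sset c d x))%:R)%:E)%E.
Proof.
elim: n => [|n IH] A /=.
  rewrite /deltaO; case: asboolP => A0; rewrite lee_fin //.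
  rewrite ler1n; apply/card_gt0P; exists ([ffun=> false], [ffun=> false]).
  rewrite /in_mem /= /in_set; apply/asboolP.
  by rewrite /ds /digsum /= big_ord0.
rewrite /Phi.
apply: le_trans (leeD (leeD (IH _) (lee_wpmul2l _ (IH _))) (IH _)) _.
  by rewrite lee_fin.
rewrite -EFinM -!EFinD lee_fin -natrM -!natrD ler_nat.
apply: leq_trans _ (@cnt_step _ c n (fun x => A x /\ Sset c d x)).
by rewrite !leq_add ?leq_mul2l ?cntP_mono // => x [[]].
Qed.

Lemma card_prod (X Y : finType) (P : X -> Prop) (Q : Y -> Prop) :
  (#|[set x | P x]| * #|[set y | Q y]| = #|[set xy : X * Y | P xy.1 /\ Q xy.2]|)%N.
Proof.
rewrite !card_sum big_distrl /= -(pair_bigA _ (fun x y => (`[< P x /\ Q y >] : nat))) /=; apply: eq_bigr => x _.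
rewrite big_distrr /=; apply: eq_bigr => y _.
by rewrite asbool_and; case: `[< P x >]; case: `[< Q y >].
Qed.

Lemma sum_card_seq (X : finType) (T : eqType) (g : X -> T) (F : seq T) :
  uniq F ->
  (\sum_(x <- F) #|[set y | g y == x]| = #|[set y | g y \in F]|)%N.
Proof.
move=> uF.
rewrite (eq_bigr (fun x => \sum_y (g y == x : nat))%N); last first.
  by move=> x _; rewrite card_sum; apply: eq_bigr => y _; rewrite asboolb.
rewrite exchange_big card_sum; apply: eq_bigr => y _; rewrite asboolb.
elim: F uF => [|a F IHF] /=; first by rewrite big_nil.
move=> /andP [aF uF]; rewrite big_cons IHF // in_cons.
case: eqP => [->|] //=; by rewrite (negbTE aF).
Qed.

Definition Fs {K : nat} (c : 'I_K -> algC) d n : seq (pt K) :=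
  undup (map (ds c) (enum (fun p : pairs n => `[< Sset c d (ds c p) >]))).

Lemma FsP {K : nat} (c : 'I_K -> algC) d n x :
  x \in Fs c d n -> exists p : pairs n, Sset c d (ds c p) /\ x = ds c p.
Proof.
rewrite mem_undup => /mapP [p]; rewrite mem_enum => /asboolP Sp ->.
by exists p.
Qed.

Lemma comb {K : nat} (c : 'I_K -> algC) d (S0 : Sset c d 0) m n :
  (mun c d m 0%R * cntP c n (Sset c d) <= \sum_(x <- Fs c d n) mun c d (m + n) x)%N.
Proof.
rewrite (eq_big_seq (fun x => #|[set r : pairs (m + n) | ds c r == x]|)); last first.
  move=> x /FsP [p [Sp ->]]; rewrite /mun asboolT //.
rewrite sum_card_seq ?undup_uniq // /mun asboolT // /cntP.
have -> : #|[set ab : pairs m | digsum c (fun i => (ab.1 i : nat)%:Z - (ab.2 i : nat)%:Z) == 0]|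
   = #|[set ab : pairs m | ds c ab == 0]| by [].
rewrite card_prod.
apply: (@card_inj _ _ (fun x : pairs m * pairs n => catp x.1 x.2)); first exact: catp_inj.
move=> [z p] /= [/eqP z0 Sp].
have -> : ds c (catp z p) = ds c p.
  by apply/ffunP => j; rewrite ds_cat z0 ffunE mulr0 add0r.
rewrite mem_undup; apply: map_f; rewrite mem_enum; exact/asboolP.
Qed.
Lemma S0 {K : nat} (c : 'I_K -> algC) d
  (hexp : forall j : 'I_K, (j < d)%N -> 1 < `|c j|) : Sset c d 0.
Proof.
move=> j jd; have -> : (0 : pt K) j = 0 by rewrite ffunE.
have h1 := hexp j jd.
rewrite /inIb normr0; case: ifP => _; [case: ifP => h2|].
- split; first exact: real0.
  by rewrite invr_ge0 subr_ge0 ltW.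
- split; first exact: real0.
  by rewrite divr_ge0 // subr_ge0 ltW.
- by rewrite divr_ge0 // subr_ge0 ltW.
Qed.

Lemma Xbar0 {K : nat} (c : 'I_K -> algC) d : Sset c d 0 -> Xbar c d 0.
Proof.
move=> S0; split => //; exists 0%N, (fun _ => 0); split; first by case.
by rewrite /digsum big_ord0.
Qed.

Lemma ds_Xbar {K : nat} (c : 'I_K -> algC) d n (p : pairs n) :
  Sset c d (ds c p) -> Xbar c d (ds c p).
Proof.
move=> Sp; split => //; exists n, (fun i => ((p.1 i : nat)%:Z - (p.2 i : nat)%:Z)).
by split => // i; case: (p.1 i); case: (p.2 i).
Qed.

Lemma ds_bound {K : nat} (c : 'I_K -> algC) n (p : pairs n) j :
  `|ds c p j| <= \sum_(i < n) `|c j| ^+ i.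
Proof.
rewrite /ds digsumE; apply: le_trans (ler_norm_sum _ _ _) _.
rewrite (reindex_inj rev_ord_inj) /=; apply: ler_sum => i _.
have -> : (n - (rev_ord i).+1 = i)%N by rewrite /=; have := ltn_ord i; lia.
rewrite -mulrzr normrM normrX.
have hle : `|((p.1 (rev_ord i) : nat)%:Z - (p.2 (rev_ord i) : nat)%:Z)%:~R : algC| <= 1.
  by case: (p.1 _); case: (p.2 _); rewrite /= ?normr0 ?normr1 ?normrN1.
by rewrite -[X in _ <= X]mulr1; apply: ler_wpM2l => //.
Qed.

Lemma cvg_sumseq (R : realType) (T : eqType) (F : seq T) (u : T -> nat -> R) (l : T -> R) :
  (forall x, x \in F -> u x @ \oo --> l x) ->
  (fun m => \sum_(x <- F) u x m) @ \oo --> \sum_(x <- F) l x.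
Proof.
elim: F => [|a F IH] hF.
  have -> : (fun m => \sum_(x <- [::]) u x m) = (fun=> 0).
    by apply: funext => m; rewrite big_nil.
  by rewrite big_nil; exact: cvg_cst.
have -> : (fun m => \sum_(x <- a :: F) u x m) = (fun m => u a m + \sum_(x <- F) u x m).
  by apply: funext => m; rewrite big_cons.
rewrite big_cons.
have H := cvgD (hF a (mem_head _ _)) (IH (fun x xF => hF x (mem_behead (s := a :: F) xF))).
exact: H.
Qed.

Theorem lemma4p1 (R : realType) (beta : algC) (d s : nat)
  (c : 'I_(d + s).+1 -> algC) (p : {poly int})
  (* beta is an algebraic integer with minimal polynomial p, whose roots
     (the Galois conjugates of beta) are exactly c 0, ..., c (d+s) *)
  (hp_monic : p \is monic)
  (hp_irr : irreducible_poly (map_poly (intr : int -> rat) p))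
  (hp_roots : map_poly (intr : int -> algC) p
              = \prod_(j < (d + s).+1) ('X - (c j)%:P))
  (hc_inj : injective c)
  (hbeta : 1 < beta < 2)
  (hd : (0 < d)%N)
  (hc0 : c ord0 = beta)
  (hexp : forall j : 'I_(d + s).+1, (j < d)%N -> 1 < `|c j|)
  (hcon : forall j : 'I_(d + s).+1, (d <= j < d + s)%N -> `|c j| < 1)
  (hfree_real : c ord_max \is Num.real)
  (hfree : 1 < `|c ord_max|)
  (* lambda and f from the known limit theorem *)
  (lam : R) (f : pt (d + s).+1 -> R)
  (hlam : 1 < lam)
  (hfpos : forall x, Xbar c d x -> 0 < f x)
  (hfle : forall x, Xbar c d x -> f x <= f 0)
  (hlim : forall x, Xbar c d x ->
     (fun n : nat => lam ^- n * (mun c d n x)%:R) @ \oo --> f x)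
  (n : nat) :
  (mass (iter n (Phi c d) (@deltaO R _))
   <= ((lam ^+ n) / fine (mubar c d f [set 0]))%:E * mubar c d f (Rn c n))%E.
Proof.
have S0' := @S0 _ c d hexp.
have X0 := @Xbar0 _ c d S0'.
have f0pos := hfpos 0 X0.
have lam0 : 0 < lam by apply: lt_trans hlam.
set N := cntP c n (Sset c d).
set F := Fs c d n.
have stepA : (mass (iter n (Phi c d) (@deltaO R _)) <= (N%:R)%:E)%E.
  rewrite /mass; apply: le_trans (@iter_le R _ c d S0' n setT) _.
  by rewrite lee_fin ler_nat cntP_mono // => x [].
have FX : forall x, x \in F -> Xbar c d x.
  by move=> x /FsP [q [Sq ->]]; exact: ds_Xbar.
have key : lam ^- n * f 0 * N%:R <= \sum_(x <- F) f x.
  have hu := cvgM (cvgM (cvg_cst (lam ^- n)) (hlim 0 X0)) (cvg_cst (N%:R : R)).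
  have hsh : forall x, x \in F -> (fun m => lam ^- (m + n) * (mun c d (m + n) x)%:R) @ \oo --> f x.
    by move=> x xF; have := hlim x (FX x xF); rewrite -(cvg_shiftn n).
  have hv := @cvg_sumseq R _ F (fun x m => lam ^- (m + n) * (mun c d (m + n) x)%:R) f hsh.
  apply: (ler_cvg_to (hu _ _ _ _) hv); apply: nearW => m /=.
  rewrite -big_distrr /= -natr_sum exprD invfM.
  have -> : lam ^- n * (lam ^- m * (mun c d m 0)%:R) * N%:R
     = (lam ^- m * lam ^- n) * ((mun c d m 0)%:R * N%:R) by ring.
  apply: ler_wpM2l; first by rewrite mulr_ge0 // invr_ge0 exprn_ge0 // ltW.
  rewrite -natrM ler_nat; exact: (comb c d S0' m n).
have stepC : ((\sum_(x <- F) f x)%:E <= mubar c d f (Rn c n))%E.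
  rewrite /mubar; apply: esum_ge; exists [set` F]; last first.
    by rewrite -fsbig_seq ?undup_uniq // sumEFin.
  split; first exact: finite_seq.
  move=> x /= xF; split; first exact: FX.
  split; first exact: FX.
  by case/FsP: xF => q [_ ->]; exact: ds_bound.
have stepD : mubar c d f [set 0] = (f 0)%:E.
  rewrite /mubar.
  have -> : Xbar c d `&` [set 0] = [set 0].
    by apply/seteqP; split => x; [case | move=> -> ].
  by rewrite esum_set1 // lee_fin ltW.
rewrite stepD /=.
apply: le_trans stepA _.
apply: le_trans _ (lee_wpmul2l _ stepC); last first.
  by rewrite lee_fin divr_ge0 // ?exprn_ge0 // ltW.
rewrite -EFinM lee_fin.
apply: le_trans _ (ler_wpM2l _ key); last first.
  by rewrite divr_ge0 // ?exprn_ge0 // ltW.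
have lamn0 : lam ^+ n != 0 by rewrite expf_neq0 // gt_eqF.
have f00 : f 0 != 0 by rewrite gt_eqF.
rewrite mulrA mulrA.
have -> : lam ^+ n / f 0 * lam ^- n * f 0 = 1.
  by rewrite [lam ^+ n / f 0 / _]mulrAC divff // mul1r mulVf.
lra.
Qed.
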